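(* Let $\mathbb{K}$ be any field and $n,s$ positive integers with $2s<n-1$. Let $\mathcal{S}$ be a linear subspace of $\mathrm{A}_n(\mathbb{K})$, and for $M\in\mathcal{S}$ let $P(M)\in\mathrm{A}_{n-1}(\mathbb{K})$ denote the upper-left $(n-1)\times(n-1)$ submatrix of $M$. Assume that $P(\mathcal{S})\subset\mathrm{WA}_{n-1,s,1}(\mathbb{K})$, that $\dim P(\mathcal{S})>a_{n-1,s,1}-(n-s-3)$, and that every matrix of $\mathcal{S}$ has rank at most $2s$. Then $\mathcal{S}$ is congruent to a subspace of $\mathrm{WA}_{n,s,1}(\mathbb{K})$.
   Context: $\mathrm{A}_p(\mathbb{K})$ denotes the $p\times p$ alternating matrices (skew-symmetric, zero diagonal). For $2s+1\le p$, $\mathrm{WA}_{p,s,1}(\mathbb{K})$ is the space of $M=(m_{i,j})\in\mathrm{A}_p(\mathbb{K})$ with $m_{i,j}=0$ whenever $i>s$, $j>s$ and $\max(i,j)>s+1$; its dimension is $a_{p,s,1}=\binom{s}{2}+s(p-s)$. Subsets $\mathcal{V},\mathcal{W}$ of $\mathrm{M}_n(\mathbb{K})$ are congruent if $\mathcal{V}=Q\mathcal{W}Q^T$ for some $Q\in\mathrm{GL}_n(\mathbb{K})$. *)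

(* Defs.v *)
From HB Require Import structures.
From mathcomp Require Import all_boot all_order all_algebra.
Set Implicit Arguments. Unset Strict Implicit. Unset Printing Implicit Defensive.
Import GRing.Theory.
Local Open Scope ring_scope.

Definition alternating (K : fieldType) (p : nat) (M : 'M[K]_p) : bool :=
  (M^T == - M) && [forall i, M i i == 0].

(* WA_{p,s,1}(K), with 0-based indices: the 1-based condition
   "i > s, j > s, max(i,j) > s+1" becomes "s <= i, s <= j, s+1 <= max i j". *)
Definition WA1 (K : fieldType) (p s : nat) (M : 'M[K]_p) : bool :=
  alternating M &&
  [forall i : 'I_p, forall j : 'I_p,
     ((s <= i)%N && (s <= j)%N && (s.+1 <= maxn i j)%N) ==> (M i j == 0)].

Definition a_dim (p s : nat) : nat := ('C(s, 2) + s * (p - s))%N.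

Definition upleft (K : fieldType) (n : nat) (M : 'M[K]_n) : 'M[K]_(n.-1) :=
  \matrix_(i < n.-1, j < n.-1)
     M (widen_ord (leq_pred n) i) (widen_ord (leq_pred n) j).

(* Main.v *)
Require Import Defs.
From HB Require Import structures.
From mathcomp Require Import all_boot all_order all_algebra.
From mathcomp Require Import zify.
Set Implicit Arguments. Unset Strict Implicit. Unset Printing Implicit Defensive.
Import GRing.Theory.
Local Open Scope ring_scope.


Section Abs.
Variables (K : fieldType) (E : vectType K).

Definition rows s (B : {ffun 'I_s -> E}) : seq E := [seq B i | i <- enum 'I_s].

Definition hdf s (B : {ffun 'I_s.+1 -> E}) : E := B ord0.
Definition tlf s (B : {ffun 'I_s.+1 -> E}) : {ffun 'I_s -> E} :=
  [ffun i => B (lift ord0 i)].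
Fact hdf_lin s : linear (@hdf s).
Proof. by move=> a u v; rewrite /hdf !ffunE. Qed.
Fact tlf_lin s : linear (@tlf s).
Proof. by move=> a u v; apply/ffunP=> i; rewrite /tlf !ffunE. Qed.
Definition hdLin k : {linear {ffun 'I_k.+1 -> E} -> E} :=
  HB.pack (@hdf k) (GRing.isLinear.Build _ _ _ _ (@hdf k) (@hdf_lin k)).
Definition tlLin k : {linear {ffun 'I_k.+1 -> E} -> {ffun 'I_k -> E}} :=
  HB.pack (@tlf k) (GRing.isLinear.Build _ _ _ _ (@tlf k) (@tlf_lin k)).
Definition hdL s : 'Hom({ffun 'I_s.+1 -> E}, E) := linfun (hdLin s).
Definition tlL s : 'Hom({ffun 'I_s.+1 -> E}, {ffun 'I_s -> E}) := linfun (tlLin s).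
Lemma hdLE s B : hdL s B = B ord0. Proof. by rewrite /hdL lfunE. Qed.
Lemma tlLE s B : tlL s B = tlf B. Proof. by rewrite /tlL lfunE. Qed.

Lemma rowsS s (B : {ffun 'I_s.+1 -> E}) : rows B = B ord0 :: rows (tlf B).
Proof.
rewrite /rows enum_ordSl /= -map_comp; congr (_ :: _).
by apply: eq_map => i; rewrite /= /tlf ffunE.
Qed.

Lemma tlfD s (A B : {ffun 'I_s.+1 -> E}) : tlf (A + B) = tlf A + tlf B.
Proof. by apply/ffunP=> i; rewrite /tlf !ffunE. Qed.

Lemma rows0 (B : {ffun 'I_0 -> E}) : rows B = [::].
Proof. by rewrite /rows; case: (enum 'I_0) (size_enum_ord 0). Qed.

Lemma size_rows s (B : {ffun 'I_s -> E}) : size (rows B) = s.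
Proof. by rewrite size_map size_enum_ord. Qed.

Lemma hdtl0 s (B : {ffun 'I_s.+1 -> E}) : B ord0 = 0 -> tlf B = 0 -> B = 0.
Proof.
move=> h0 ht; apply/ffunP=> i; rewrite ffunE.
case: (unliftP ord0 i) => [j ->|->] //.
by move/ffunP: ht => /(_ j); rewrite !ffunE.
Qed.

Lemma notsubv (A B : {vspace E}) : ~~ (A <= B)%VS -> exists2 z, z \in A & z \notin B.
Proof.
move=> h.
have: ~~ all (fun z => z \in B) (vbasis A).
  apply: contra h => /allP hall.
  rewrite -(span_basis (vbasisP A)); apply/span_subvP => z zA; exact: hall.
by case/allPn=> z zA zB; exists z => //; exact: vbasis_mem.
Qed.

Lemma exists_notin (U : {vspace E}) (X : seq E) :
  (size X < \dim U)%N -> exists2 z, z \in U & z \notin <<X>>%VS.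
Proof.
move=> h; apply: notsubv; apply/negP => sub.
by have := leq_trans (dimvS sub) (dim_span X); rewrite leqNgt h.
Qed.

Lemma dimB s (U : {vspace E}) (V : {vspace {ffun 'I_s -> E}}) :
  (forall B, B \in V -> forall i, B i \in U) -> (\dim V <= s * \dim U)%N.
Proof.
elim: s V => [|s IH] V HV.
  suff ->: V = 0%VS by rewrite dimv0.
  apply/eqP; rewrite -subv0; apply/subvP=> B _; rewrite memv0.
  by apply/eqP/ffunP=> [[]].
have eqd := limg_ker_dim (tlL s) V.
have h1 : (\dim (tlL s @: V) <= s * \dim U)%N.
  apply: IH => B /memv_imgP[C CV ->] i; rewrite tlLE ffunE; exact: HV.
have h2 : (\dim (V :&: lker (tlL s)) <= \dim U)%N.
  rewrite -(limg_dim_eq (f := hdL s)).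
    apply: dimvS; apply/subvP=> z /memv_imgP[C /memv_capP[CV _] ->].
    by rewrite hdLE; exact: HV.
  apply/eqP; rewrite -subv0; apply/subvP=> B /memv_capP[/memv_capP[_]].
  rewrite !memv_ker tlLE hdLE => /eqP ht /eqP h0.
  by rewrite (hdtl0 h0 ht) mem0v.
by rewrite -eqd mulSn; exact: leq_add h2 h1.
Qed.

Lemma AG_fin s (V : {vspace {ffun 'I_s.+1 -> E}}) (R : seq E) B0 B1 D z :
  D \in V -> tlf (B0 + D) = B1 -> free (R ++ rows B1) ->
  z \in (hdL s @: (V :&: lker (tlL s)))%VS -> z \notin <<R ++ rows B1>>%VS ->
  exists B, (B - B0 \in V) /\ free (R ++ rows B).
Proof.
move=> DV htl fr /memv_imgP[D2 /memv_capP[D2V]] ; rewrite memv_ker tlLE => /eqP tD2 -> zn.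
rewrite hdLE in zn.
set x0 := (B0 + D) ord0.
have key : forall x, x \notin <<R ++ rows B1>>%VS -> free (R ++ x :: rows B1).
  move=> x xn.
  have hp : perm_eq (R ++ [:: x] ++ rows B1) ([:: x] ++ R ++ rows B1).
    by rewrite (perm_catCA R [:: x]).
  by rewrite (perm_free hp) /= free_cons xn fr.
case: (boolP (x0 \in <<R ++ rows B1>>%VS)) => hx.
  exists (B0 + D + D2); split.
    by rewrite addrC !addrA addNr add0r memvD.
  rewrite rowsS.
  have -> : tlf (B0 + D + D2) = B1 by rewrite tlfD htl tD2 addr0.
  apply: key; rewrite ffunE.
  apply: contra zn => h; rewrite -(addKr x0 (D2 ord0)) addrC.
  exact: memvB.
exists (B0 + D); split; first by rewrite addrC addrA addNr add0r.
by rewrite rowsS htl; apply: key.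
Qed.

Lemma AG : forall s (U : {vspace E}) (R : seq E) (V : {vspace {ffun 'I_s -> E}})
  (B0 : {ffun 'I_s -> E}),
  free R -> {subset R <= U} -> (forall B, B \in V -> forall i, B i \in U) ->
  (size R + s <= \dim U)%N -> (s * \dim U + size R + 1 <= \dim V + \dim U)%N ->
  exists B, (B - B0 \in V) /\ free (R ++ rows B).
Proof.
elim=> [|s IH] U R V B0 fR RU VU hsz hdim.
  exists B0; split; first by rewrite subrr mem0v.
  by rewrite rows0 cats0.
set V1 := (tlL s @: V)%VS; set L := (hdL s @: (V :&: lker (tlL s)))%VS.
have dL : \dim L = \dim (V :&: lker (tlL s)).
  apply: limg_dim_eq.
  apply/eqP; rewrite -subv0; apply/subvP=> B /memv_capP[/memv_capP[_]].
  rewrite !memv_ker tlLE hdLE => /eqP ht /eqP h0.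
  by rewrite (hdtl0 h0 ht) mem0v.
have dV : \dim V = (\dim V1 + \dim L)%N.
  by rewrite dL addnC limg_ker_dim.
have V1U : forall B, B \in V1 -> forall i, B i \in U.
  by move=> B /memv_imgP[C CV ->] i; rewrite tlLE ffunE; exact: VU.
have LU : (L <= U)%VS.
  by apply/subvP=> z /memv_imgP[C /memv_capP[CV _] ->]; rewrite hdLE; exact: VU.
have dV1 := dimB V1U.
have dLU := dimvS LU.
set u := \dim U in hsz hdim dV1 dLU *.
set dv := \dim V in hdim dV.
set dv1 := \dim V1 in dV dV1.
set dl := \dim L in dV dLU.
set k := size R in hsz hdim *.
rewrite mulSn in hdim.
set w := (s * u)%N in hdim dV1 *.
have lift_B1 : forall B1, B1 - tlf B0 \in V1 -> exists2 D, D \in V & tlf (B0 + D) = B1.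
  move=> B1 /memv_imgP[D DV]; rewrite tlLE => hD; exists D => //.
  by rewrite tlfD -hD addrC subrK.
case: (boolP (L <= <<R>>)%VS) => hLR.
  have := dimvS hLR; move: fR; rewrite /free => /eqP ->.
  rewrite -/dl -/k; lia.
case: (boolP (U <= L)%VS) => hUL.
  have [B1 [hB1 fB1]] := IH U R V1 (tlf B0) fR RU V1U ltac:(lia) ltac:(rewrite -/w -/u -/dv1 -/k; lia).
  have [D DV hD] := lift_B1 B1 hB1.
  have [z zU zn] := exists_notin (U := U) (X := R ++ rows B1) ltac:(rewrite size_cat size_rows; lia).
  exact: AG_fin DV hD fB1 (subvP hUL z zU) zn.
have [r rL rn] := notsubv hLR.
have dLlt : (\dim L < u)%N.
  have := dimv_leqif_sup LU; rewrite (negPf hUL) => h.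
  by rewrite /dl ltn_neqAle h.
have fR' : free (r :: R) by rewrite free_cons rn fR.
have RU' : {subset r :: R <= U}.
  by move=> x; rewrite inE => /orP[/eqP ->|]; [exact: (subvP LU) | exact: RU].
have [B1 [hB1 fB1]] := IH U (r :: R) V1 (tlf B0) fR' RU' V1U ltac:(simpl; rewrite -/k; lia) ltac:(simpl; rewrite -/w -/u -/dv1 -/k; lia).
have [D DV hD] := lift_B1 B1 hB1.
move: fB1; rewrite cat_cons free_cons => /andP[rn' fB1].
exact: AG_fin DV hD fB1 rL rn'.
Qed.

End Abs.


Section Eigen.
Variables (K : fieldType) (T E' : vectType K).

Lemma eigen (S : {vspace T}) (f g : 'Hom(T, E')) :
  (forall M, M \in S -> f M \in <[g M]>%VS) ->
  exists t, forall M, M \in S -> f M = t *: g M.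
Proof.
move=> H.
case: (boolP (g @: S <= 0)%VS) => hz.
  exists 0 => M MS.
  have gM0 : g M = 0 by apply/eqP; rewrite -memv0; apply: (subvP hz); exact: memv_img.
  by move: (H M MS); rewrite gM0 scale0r => /vlineP[k ->]; rewrite scaler0.
have [z /memv_imgP[M1 M1S ->] zn] := notsubv hz.
rewrite memv0 in zn.
have [t ht] := vlineP _ _ (H M1 M1S).
exists t => M MS.
have [c hc] := vlineP _ _ (H M MS).
case: (boolP (g M \in <[g M1]>%VS)) => hg.
  have [d hd] := vlineP _ _ hg.
  have MS' : M - d *: M1 \in S by rewrite memvB // memvZ.
  have h0 : g (M - d *: M1) = 0 by rewrite linearB linearZ /= hd subrr.
  have := H _ MS'; rewrite h0 => /vlineP[k]; rewrite scaler0.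
  move/eqP; rewrite linearB linearZ /= subr_eq0 => /eqP ->.
  by rewrite ht hd !scalerA mulrC.
have [e he] := vlineP _ _ (H _ (memvD MS M1S)).
move: he; rewrite !linearD /= hc ht => /eqP.
rewrite -subr_eq0 opprD addrACA -!scalerBl => /eqP heq.
have ec : c - e = 0.
  apply/eqP; apply: contraR hg => hne.
  apply/vlineP; exists (- ((c - e)^-1 * (t - e))).
  apply: (scalerI hne); rewrite scalerA mulrN mulrA divff // mul1r scaleNr.
  by apply/eqP; rewrite -addr_eq0 heq.
move: heq; rewrite ec scale0r add0r => /eqP; rewrite scaler_eq0 (negPf zn) orbF => et.
have ce : c = e by apply/eqP; rewrite -subr_eq0 ec.
have te : t = e by apply/eqP; rewrite -subr_eq0.
by rewrite ce te.
Qed.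

End Eigen.


Section Core.
Variables (K : fieldType) (q : nat) (T : vectType K).
Local Notation E := 'rV[K]_q.

Lemma dimE : \dim {:E} = q.
Proof. rewrite dimvf dim_matrix; lia. Qed.

Lemma span_rowsP s (B : {ffun 'I_s -> E}) i : B i \in <<rows B>>%VS.
Proof. by apply: memv_span; apply: map_f; exact: mem_enum. Qed.

Definition mxr s (B : {ffun 'I_s -> E}) : 'M[K]_(s, q) := \matrix_(i < s) (B i).

Lemma submx_span s (B : {ffun 'I_s -> E}) g : (g <= mxr B)%MS -> g \in <<rows B>>%VS.
Proof.
case/submxP=> D ->; rewrite mulmx_sum_row; apply: memv_suml => i _.
by rewrite rowK; apply: memvZ; exact: span_rowsP.
Qed.

Lemma step1 s (S : {vspace T}) (be : 'Hom(T, {ffun 'I_s -> E})) (ga : 'Hom(T, E)) :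
  (s.+1 <= q)%N -> (s * q + 2 <= \dim (be @: S) + q)%N ->
  (forall M, M \in S -> free (rows (be M)) -> ga M \in <<rows (be M)>>%VS) ->
  forall M, M \in S -> be M = 0 -> ga M = 0.
Proof.
move=> hq hd H2 M MS bM; apply/eqP; apply: contraT => gn.
have fR : free [:: ga M] by rewrite seq1_free gn.
have [B [hB fB]] := AG (U := fullv) (R := [:: ga M]) (V := be @: S) 0 fR
  (fun x _ => memvf x) (fun B _ i => memvf (B i))
  ltac:(rewrite dimE /=; lia) ltac:(by rewrite dimE /= -addnA).
rewrite subr0 in hB; case/memv_imgP: hB => M' M'S ->{B} in fB.
move: fB; rewrite cat1s free_cons => /andP[gn' fB'].
have h1 := H2 M' M'S fB'.
have h2 := H2 (M' + M) (memvD M'S MS); rewrite linearD /= bM addr0 in h2.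
have := h2 fB'; rewrite linearD /= => h3.
have : ga M \in <<rows (be M')>>%VS.
  by rewrite -(addKr (ga M') (ga M)) memvD // memvN.
by rewrite (negPf gn').
Qed.

Definition chif k (y : 'cV[K]_q) (B : {ffun 'I_k -> E}) : {ffun 'I_k -> 'M[K]_1} :=
  [ffun i => B i *m y].
Fact chif_lin k y : linear (@chif k y).
Proof. by move=> a u v; apply/ffunP=> i; rewrite /chif !ffunE mulmxDl scalemxAl. Qed.
Definition chiLin k y : {linear {ffun 'I_k -> E} -> {ffun 'I_k -> 'M[K]_1}} :=
  HB.pack (@chif k y) (GRing.isLinear.Build _ _ _ _ (@chif k y) (@chif_lin k y)).

Lemma dim1 : \dim {:'M[K]_1} = 1%N.
Proof. by rewrite dimvf dim_matrix. Qed.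

Lemma kl s (S : {vspace T}) (be : 'Hom(T, {ffun 'I_s -> E})) (ga : 'Hom(T, E)) :
  (s.+1 <= q)%N -> (s * q + 3 <= \dim (be @: S) + q)%N ->
  (forall M, M \in S -> free (rows (be M)) -> ga M \in <<rows (be M)>>%VS) ->
  forall M, M \in S -> ga M \in <<rows (be M)>>%VS.
Proof.
move=> hq hd H2 M MS; apply: contraT => gn.
have hd2 : (s * q + 2 <= \dim (be @: S) + q)%N.
  by apply: leq_trans hd; rewrite leq_add2l.
have st1 := step1 hq hd2 H2.
set Bm := mxr (be M).
have nsub : ~~ (ga M <= Bm)%MS by apply: contra gn; exact: submx_span.
rewrite submxE in nsub.
have [j hj] : exists j, (ga M *m cokermx Bm) 0 j != 0.
  by case/matrix0Pn: nsub => i [j hj]; exists j; rewrite -(ord1 i).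
set y := cokermx Bm *m delta_mx j (0 : 'I_1).
have hy : forall i, be M i *m y = 0.
  move=> i; have -> : be M i = row i Bm by rewrite rowK.
  by rewrite /y mulmxA -row_mul mulmx_coker row0 mul0mx.
have hyg : ga M *m y != 0.
  apply: contra hj; rewrite /y mulmxA -colE => /eqP /matrixP /(_ 0 0).
  by rewrite !mxE => ->.
pose phi : 'Hom(E, 'M[K]_1) := linfun (mulmxr y).
have phiE : forall r, phi r = r *m y by move=> r; rewrite lfunE.
pose U := lker phi.
pose chi := linfun (chiLin s y).
have chiE : forall B i, chi B i = B i *m y by move=> B i; rewrite lfunE /= ffunE.
pose H1 := (S :&: lker (chi \o be))%VS.
pose H := (H1 :&: lker (phi \o ga))%VS.
pose X := (be @: S)%VS.
have d1 : (\dim X <= \dim (X :&: lker chi) + s)%N.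
  have e := limg_ker_dim chi X.
  have e2 := dimB (U := fullv) (V := chi @: X) (fun B _ i => memvf (B i)).
  rewrite dim1 muln1 in e2.
  by rewrite -e leq_add2l.
have d2 : (X :&: lker chi <= be @: H1)%VS.
  apply/subvP => B /memv_capP[/memv_imgP[M' M'S ->]]; rewrite memv_ker => /eqP h.
  by apply: memv_img; rewrite memv_cap M'S memv_ker comp_lfunE h eqxx.
have d3 : (\dim (be @: H1) <= \dim (be @: H) + 1)%N.
  have e1 := limg_ker_dim be H1; have e2 := limg_ker_dim be H.
  have e3 := limg_ker_dim (phi \o ga) H1.
  have e4 : (\dim ((phi \o ga) @: H1) <= 1)%N by apply: (leq_trans (dimvS (subvf _))); rewrite dim1.
  have e5 : (H1 :&: lker be <= H :&: lker be)%VS.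
    apply/subvP=> M' /memv_capP[M'H1 kb]; rewrite memv_ker in kb.
    have M'S : M' \in S by move: M'H1; rewrite memv_cap => /andP[].
    rewrite memv_cap memv_ker kb andbT memv_cap M'H1 memv_ker comp_lfunE.
    by rewrite (st1 M' M'S (eqP kb)) linear0 eqxx.
  have e6 := dimvS e5.
  have e7 : (H :&: lker be <= H1 :&: lker be)%VS by apply: capvS (capvSl _ _) (subvv _).
  have e8 := dimvS e7.
  rewrite -/H in e3.
  move: e1 e2 e3 e4 e6 e8.
  set a1 := \dim (H1 :&: lker be); set a2 := \dim (be @: H1).
  set a3 := \dim H1; set a4 := \dim (H :&: lker be); set a5 := \dim (be @: H).
  set a6 := \dim H; set a7 := \dim ((phi \o ga) @: H1).
  lia.
have dU : (\dim U).+1 = q.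
  have e := limg_ker_dim phi fullv; rewrite capfv dimE in e.
  have e4 : (\dim (phi @: fullv) <= 1)%N by apply: (leq_trans (dimvS (subvf _))); rewrite dim1.
  have e5 : (\dim (phi @: fullv) != 0)%N.
    rewrite dimv_eq0; apply: contra hyg => /eqP h0.
    by rewrite -phiE -memv0 -h0 memv_img // memvf.
  apply: (etrans _ e); move: e4 e5; rewrite /U; set a := \dim (phi @: _); set b := \dim (lker phi).
  lia.
have HU : forall B : {ffun 'I_s -> E}, B \in (be @: H)%VS -> forall i, B i \in U.
  move=> B /memv_imgP[M' /memv_capP[/memv_capP[_ hc] _] ->] i.
  rewrite memv_ker comp_lfunE in hc.
  move/eqP/ffunP: hc => /(_ i); rewrite chiE ffunE => hc.
  by rewrite memv_ker phiE hc.
have d4 := dimvS d2.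
have [B [hB fB]] := AG (U := U) (R := [::]) (V := be @: H) (be M) (nil_free _)
  (fun x (xin : x \in [::]) => ltac:(by [])) HU
  ltac:(rewrite /= -ltnS dU //) 
  ltac:(rewrite /= addn0;
        move: hd d1 d3 d4 dU; rewrite -/X;
        set a1 := \dim X; set a2 := \dim (X :&: lker chi); set a3 := \dim (be @: H1);
        set a4 := \dim (be @: H); set u := \dim U => hd' d1' d3' d4' dU';
        rewrite -dU' mulnS in hd'; set w := (s * u)%N in hd' *; lia).
case/memv_imgP: hB => M' M'H hB'.
have M'S : M' \in S by move: M'H; rewrite !memv_cap => /andP[/andP[]].
have gM' : ga M' *m y = 0.
  by move: M'H; rewrite memv_cap memv_ker comp_lfunE phiE => /andP[_ /eqP].
have eB : B = be (M + M') by rewrite linearD /= -hB' addrC subrK.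
have hin := H2 (M + M') (memvD MS M'S) ltac:(by rewrite -eB).
rewrite -eB in hin.
have spU : (<<rows B>> <= U)%VS.
  apply/span_subvP => x /mapP[i _ ->].
  rewrite eB linearD /= ffunE; apply: memvD; last by apply: HU; exact: memv_img.
  by rewrite memv_ker phiE hy.
have := subvP spU _ hin; rewrite memv_ker phiE linearD /= mulmxDl gM' addr0.
by rewrite (negPf hyg).
Qed.

End Core.


Section RC.
Variables (K : fieldType) (q : nat) (T : vectType K).
Local Notation E := 'rV[K]_q.

Definition evf k (i : 'I_k) (B : {ffun 'I_k -> E}) : E := B i.
Fact evf_lin k (i : 'I_k) : linear (@evf k i).
Proof. by move=> a u v; rewrite /evf !ffunE. Qed.
Definition evLin k (i : 'I_k) : {linear {ffun 'I_k -> E} -> E} :=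
  let f := @evf k i in let fl := @evf_lin k i in
  HB.pack f (GRing.isLinear.Build _ _ _ _ f fl).
Definition evL k (i : 'I_k) : 'Hom({ffun 'I_k -> E}, E) := linfun (evLin i).
Lemma evLE k (i : 'I_k) B : evL i B = B i. Proof. by rewrite /evL lfunE. Qed.

Lemma span0cons (X : seq E) : span (0 :: X) = span X.
Proof.
rewrite span_cons; have -> : <[0 : E]>%VS = 0%VS.
  apply/eqP; rewrite -subv0; apply/subvP=> z /vlineP[k ->]; by rewrite scaler0 mem0v.
by rewrite add0v.
Qed.

Lemma rc : forall s (S : {vspace T}) (be : 'Hom(T, {ffun 'I_s -> E})) (ga : 'Hom(T, E)),
  (s.+1 <= q)%N -> (s * q + 3 <= \dim (be @: S) + q)%N ->
  (forall M, M \in S -> ga M \in <<rows (be M)>>%VS) ->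
  exists a : 'I_s -> K, forall M, M \in S -> ga M = \sum_i a i *: be M i.
Proof.
elim=> [|s IH] S be ga hq hd H.
  exists (fun _ => 0) => M MS; rewrite big_ord0.
  by move: (H M MS); rewrite rows0 span_nil memv0 => /eqP.
pose be' := (tlL E s \o be)%VF; pose h0 := (hdL E s \o be)%VF.
have be'E : forall M, be' M = tlf (be M) by move=> M; rewrite comp_lfunE tlLE.
have h0E : forall M, h0 M = be M ord0 by move=> M; rewrite comp_lfunE hdLE.
pose S' := (S :&: lker h0)%VS.
pose X := (be @: S)%VS.
have dS' : (\dim X <= \dim (be' @: S') + q)%N.
  pose X0 := (X :&: lker (hdL E s))%VS.
  have e1 := limg_ker_dim (hdL E s) X.
  have e2 : (\dim (hdL E s @: X) <= q)%N.
    by apply: (leq_trans (dimvS (subvf _))); rewrite dimE.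
  have e3 : \dim (tlL E s @: X0) = \dim X0.
    apply: limg_dim_eq.
    apply/eqP; rewrite -subv0; apply/subvP=> B /memv_capP[/memv_capP[_]].
    rewrite !memv_ker tlLE hdLE => /eqP h1 /eqP h2.
    by rewrite (hdtl0 h1 h2) mem0v.
  have e4 : (tlL E s @: X0 <= be' @: S')%VS.
    apply/subvP => B /memv_imgP[C /memv_capP[/memv_imgP[M MS ->] hC] ->].
    rewrite memv_ker hdLE in hC; apply/memv_imgP; exists M.
      by rewrite memv_cap MS memv_ker h0E.
    by rewrite be'E tlLE.
  have e5 := dimvS e4.
  move: e1 e2 e3 e5; rewrite -/X0.
  set a1 := \dim X0; set a2 := \dim (hdL E s @: X); set a3 := \dim X.
  set a4 := \dim (tlL E s @: X0); set a5 := \dim (be' @: S').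
  lia.
have hd' : (s * q + 3 <= \dim (be' @: S') + q)%N.
  move: hd dS'; rewrite -/X mulSn.
  set a1 := \dim X; set a2 := \dim (be' @: S'); set w := (s * q)%N.
  lia.
have H' : forall M, M \in S' -> ga M \in <<rows (be' M)>>%VS.
  move=> M /memv_capP[MS]; rewrite memv_ker h0E => /eqP h00.
  by have := H M MS; rewrite rowsS h00 span0cons be'E.
have [a' ha'] := IH S' be' ga (ltnW hq) hd' H'.
pose sumL := (\sum_i a' i *: (evL i \o be'))%VF.
have sumE : forall M, sumL M = \sum_i a' i *: be M (lift ord0 i).
  move=> M; rewrite sum_lfunE; apply: eq_bigr => i _.
  by rewrite scale_lfunE comp_lfunE evLE be'E /tlf ffunE.
pose ga2 := (ga - sumL)%VF.
have ga2E : forall M, ga2 M = ga M - sumL M.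
  by move=> M; rewrite add_lfunE opp_lfunE.
have g2S' : forall M, M \in S' -> ga2 M = 0.
  move=> M MS'; rewrite ga2E sumE (ha' M MS'); apply/eqP; rewrite subr_eq0; apply/eqP.
  by apply: eq_bigr => i _; rewrite be'E /tlf ffunE.
have g2c : forall M, M \in S -> ga2 M \in <<rows (be M)>>%VS.
  move=> M MS; rewrite ga2E sumE; apply: memvB; first exact: H.
  by apply: memv_suml => i _; apply: memvZ; exact: span_rowsP.
have eig : forall M, M \in S -> ga2 M \in <[h0 M]>%VS.
  move=> M MS; apply: contraT => vn.
  rewrite h0E in vn.
  have xn : be M ord0 != 0.
    apply: contra vn => /eqP x0.
    have MS' : M \in S' by rewrite memv_cap MS memv_ker h0E x0 eqxx.
    by rewrite g2S' // mem0v.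
  have fR : free [:: ga2 M; be M ord0].
    by rewrite free_cons span_seq1 seq1_free xn andbT.
  have [B1 [hB1 fB1]] := AG (U := fullv) (R := [:: ga2 M; be M ord0])
    (V := be' @: S') (tlf (be M)) fR (fun x _ => memvf x) (fun B _ i => memvf (B i))
    ltac:(by rewrite dimE) ltac:(by rewrite dimE -addnA).
  case/memv_imgP: hB1 => M' M'S' hM'.
  have M'S : M' \in S by move: M'S'; rewrite memv_cap => /andP[].
  have h0M' : be M' ord0 = 0.
    by move: M'S'; rewrite memv_cap memv_ker h0E => /andP[_ /eqP].
  have eb : be (M + M') ord0 = be M ord0 by rewrite linearD /= ffunE h0M' addr0.
  have et : tlf (be (M + M')) = B1.
    by rewrite linearD /= tlfD -(be'E M') -hM' addrC subrK.
  have eg : ga2 (M + M') = ga2 M by rewrite linearD /= (g2S' M') // addr0.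
  have := g2c (M + M') (memvD MS M'S); rewrite eg rowsS eb et.
  move: fB1; rewrite /= free_cons => /andP[vn' _].
  by rewrite (negPf vn').
have [t ht] := eigen eig.
exists (fun i => if unlift ord0 i is Some j then a' j else t) => M MS.
rewrite big_ord_recl unlift_none.
under eq_bigr do rewrite liftK.
have := ht M MS; rewrite ga2E h0E sumE => /eqP; rewrite subr_eq => /eqP ->.
by rewrite addrC.
Qed.

Lemma core s (S : {vspace T}) (be : 'Hom(T, {ffun 'I_s -> E})) (ga : 'Hom(T, E)) :
  (s.+1 <= q)%N -> (s * q + 3 <= \dim (be @: S) + q)%N ->
  (forall M, M \in S -> free (rows (be M)) -> ga M \in <<rows (be M)>>%VS) ->
  exists a : 'I_s -> K, forall M, M \in S -> ga M = \sum_i a i *: be M i.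
Proof. move=> hq hd H2; exact: rc hq hd (kl hq hd H2). Qed.

End RC.


Section MX.
Variable K : fieldType.

Lemma tr11 (A : 'M[K]_1) : A^T = A.
Proof. by apply/matrixP=> i j; rewrite mxE !ord1. Qed.

Lemma alt_quad n (M : 'M[K]_n) (x : 'rV[K]_n) :
  M^T = - M -> (forall i, M i i = 0) -> x *m M *m x^T = 0.
Proof.
move=> hs hd.
pose L := \matrix_(i, j) (if (i < j)%N then M i j else 0 : K).
have eM : M = L - L^T.
  apply/matrixP=> i j; rewrite !mxE.
  case: (ltngtP i j) => hij.
  - by rewrite subr0.
  - by rewrite sub0r; move/matrixP: hs => /(_ i j); rewrite !mxE => ->; rewrite opprK.
  - have e : i = j by apply: val_inj.
    by rewrite -e hd subrr.
rewrite eM mulmxBr mulmxBl.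
have -> : x *m L^T *m x^T = (x *m L *m x^T)^T.
  by rewrite !trmx_mul trmxK mulmxA.
by rewrite tr11 subrr.
Qed.

Lemma unit_block k (A : 'M[K]_k) : block_mx A 1%:M (- 1%:M) 0 \in unitmx.
Proof.
case: (@mulmx1_unit _ _ (block_mx A 1%:M (- 1%:M) 0) (block_mx 0 (- 1%:M) 1%:M A)) => //.
rewrite mulmx_block !mulmx0 !mul0mx !mulmx1 !mul1mx !addr0 !add0r mulmxN mulmx1.
by rewrite addNr mulNmx mulmxN mulmx1 opprK scalar_mx_block.
Qed.

Lemma selR a n b (X : 'M[K]_(a, n)) (h : 'I_b -> 'I_n) :
  X *m (rowsub h 1%:M)^T = \matrix_(i, j) X i (h j).
Proof.
rewrite -[LHS]trmxK trmx_mul trmxK -rowsubE.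
by apply/matrixP=> i j; rewrite !mxE.
Qed.

Lemma selL a n b (X : 'M[K]_(n, a)) (h : 'I_b -> 'I_n) :
  rowsub h 1%:M *m X = \matrix_(i, j) X (h i) j.
Proof. by rewrite -rowsubE; apply/matrixP=> i j; rewrite !mxE. Qed.

Lemma rank_rows q s (B : {ffun 'I_s -> 'rV[K]_q}) :
  free (rows B) -> \rank (mxr B) = s.
Proof.
move=> fr; apply/eqP; rewrite eqn_leq rank_leq_row /= leqNgt; apply/negP => hlt.
have : kermx (mxr B) != 0.
  by rewrite -mxrank_eq0 mxrank_ker subn_eq0 -ltnNge.
case/matrix0Pn => i [j hij].
set u := row i (kermx (mxr B)).
have hu : u *m mxr B = 0 by rewrite /u -row_mul mulmx_ker row0.
have fX : free (map_tuple B (ord_tuple s)) by [].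
move/freeP: fX => /(_ (fun k => u 0 k)) h.
have hs : \sum_(k < s) u 0 k *: (map_tuple B (ord_tuple s))`_k = 0.
  apply: etrans (_ : _ = u *m mxr B) hu; rewrite mulmx_sum_row; apply: eq_bigr => k _.
  by rewrite rowK -tnth_nth tnth_map tnth_ord_tuple.
by move: (h hs j); rewrite /u mxE => /eqP; rewrite (negPf hij).
Qed.

End MX.


Section App.
Variables (K : fieldType) (m s : nat).
Local Notation q := (m - s)%N.
Local Notation MM := 'M[K]_(m.+1).

Definition bef (M : MM) : {ffun 'I_s -> 'rV[K]_q} :=
  [ffun i : 'I_s => \row_(j < q) M (inord i) (inord (s + j))].
Definition gam (M : MM) : 'rV[K]_q := \row_(j < q) M (inord m) (inord (s + j)).
Fact bef_lin : linear bef.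
Proof. by move=> a u v; apply/ffunP=> i; rewrite !ffunE; apply/rowP=> j; rewrite !mxE. Qed.
Fact gam_lin : linear gam.
Proof. by move=> a u v; apply/rowP=> j; rewrite !mxE. Qed.
Definition befLin : {linear MM -> {ffun 'I_s -> 'rV[K]_q}} :=
  HB.pack bef (GRing.isLinear.Build _ _ _ _ bef bef_lin).
Definition gamLin : {linear MM -> 'rV[K]_q} :=
  HB.pack gam (GRing.isLinear.Build _ _ _ _ gam gam_lin).
Definition beL : 'Hom(MM, {ffun 'I_s -> 'rV[K]_q}) := linfun befLin.
Definition gaL : 'Hom(MM, 'rV[K]_q) := linfun gamLin.
Lemma beLE M i j : beL M i 0 j = M (inord i) (inord (s + j)).
Proof. by rewrite /beL lfunE /= /bef ffunE mxE. Qed.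
Lemma gaLE M j : gaL M 0 j = M (inord m) (inord (s + j)).
Proof. by rewrite /gaL lfunE /= /gam mxE. Qed.

Lemma alt_skew (M : MM) : alternating M -> forall i j, M j i = - M i j.
Proof.
by case/andP=> /eqP hs _ i j; move/matrixP: hs => /(_ i j); rewrite !mxE.
Qed.
Lemma alt_diag (M : MM) : alternating M -> forall i, M i i = 0.
Proof. by case/andP=> _ /forallP h i; apply/eqP. Qed.

Lemma W0 (M : MM) : alternating M -> WA1 s (upleft M) ->
  forall i j, (s <= i < m)%N -> (s <= j < m)%N -> M (inord i) (inord j) = 0.
Proof.
move=> hA /andP[_ /forallP hW] i j /andP[si im] /andP[sj jm].
case: (eqVneq i j) => [->|nij]; first exact: alt_diag.
have := hW (Ordinal im) => /forallP /(_ (Ordinal jm)) /implyP.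
rewrite /= si sj /= => /(_ ltac:(lia)) /eqP.
rewrite /upleft mxE.
have e1 : widen_ord (leq_pred m.+1) (Ordinal im) = inord i :> 'I_m.+1.
  by apply: val_inj; rewrite /= inordK //; lia.
have e2 : widen_ord (leq_pred m.+1) (Ordinal jm) = inord j :> 'I_m.+1.
  by apply: val_inj; rewrite /= inordK //; lia.
by rewrite e1 e2.
Qed.

Lemma H2 (M : MM) : alternating M -> WA1 s (upleft M) -> (\rank M <= 2 * s)%N ->
  free (rows (beL M)) -> gaL M \in <<rows (beL M)>>%VS.
Proof.
move=> hA hW hr fr.
have rk := rank_rows fr.
set Bm := mxr (beL M); set g := gaL M.
apply: submx_span; apply: contraT => ng.
have rN : \rank (col_mx Bm g) = (s + 1)%N.
  have e : \rank (Bm + g)%MS = \rank (col_mx Bm g).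
    by apply/eqmx_rank; apply/eqmxP; exact: addsmxE.
  have h1 := mxrank_leqif_sup (addsmxSl Bm g).
  rewrite addsmx_sub submx_refl (negPf ng) /= in h1.
  have h2 := rank_leq_row (col_mx Bm g).
  move: h1 => [h1a h1b].
  have h3 : (\rank Bm < \rank (Bm + g)%MS)%N by rewrite ltn_neqAle h1a h1b.
  rewrite -e; rewrite -e in h2; rewrite rk in h3; apply/eqP; rewrite eqn_leq h2 /=; lia.
have rf : row_free (col_mx Bm g) by rewrite /row_free rN.
case/row_freeP: rf => C hC.
pose fidx (i : 'I_(s + 1)) : 'I_m.+1 := inord (if (i < s)%N then val i else m).
pose hidx (j : 'I_q) : 'I_m.+1 := inord (s + j).
pose F : 'M[K]_(s + 1, m.+1) := rowsub fidx 1%:M.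
pose Hc : 'M[K]_(q, m.+1) := rowsub hidx 1%:M.
have eN : F *m M *m Hc^T = col_mx Bm g.
  rewrite /F /Hc selL selR; apply/matrixP => i j.
  rewrite -(splitK i); case: (split i) => k /=; rewrite ?col_mxEu ?col_mxEd !mxE.
    by rewrite /fidx /= ltn_ord beLE.
  by rewrite /fidx /= ltnNge leq_addr /= ord1 gaLE.
have eH : Hc *m M *m Hc^T = 0.
  rewrite /Hc selL selR; apply/matrixP => i j; rewrite !mxE /hidx.
  apply: W0 => //.
    by have := ltn_ord i; lia.
  by have := ltn_ord j; lia.
have hs : M^T = - M by case/andP: hA => /eqP.
have eH2 : Hc *m M *m F^T = - (col_mx Bm g)^T.
  by rewrite -eN !trmx_mul trmxK hs mulmxA mulmxN mulNmx opprK.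
pose G := C^T *m Hc.
have eO : col_mx F G *m M *m (col_mx F G)^T = block_mx (F *m M *m F^T) 1%:M (- 1%:M) 0.
  rewrite mul_col_mx tr_col_mx mul_col_row; congr block_mx.
  - by rewrite /G trmx_mul trmxK !mulmxA eN hC.
  - have -> : G *m M *m F^T = C^T *m (Hc *m M *m F^T) by rewrite /G !mulmxA.
    by rewrite eH2 mulmxN -trmx_mul hC trmx1.
  - have -> : G *m M *m G^T = C^T *m (Hc *m M *m Hc^T) *m C.
      by rewrite /G trmx_mul trmxK !mulmxA.
    by rewrite eH mulmx0 mul0mx.
have hrk := mxrank_unit (unit_block (F *m M *m F^T)).
rewrite -eO in hrk.
have : (\rank (col_mx F G *m M *m (col_mx F G)^T) <= \rank M)%N.
  by apply: leq_trans (mxrankM_maxl _ _) _; exact: mxrankM_maxr.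
rewrite hrk; lia.
Qed.

End App.


Lemma card_pairs s : #|{: {j : 'I_s & 'I_j}}| = 'C(s, 2).
Proof.
rewrite card_tagged.
have -> : [seq #|'I_i| | i : 'I_s <- enum 'I_s] = map val (enum 'I_s).
  by apply: eq_map => i; rewrite card_ord.
by rewrite val_enum_ord -bin2_sum sumnE /index_iota subn0.
Qed.

Section App2.
Variables (K : fieldType) (m s : nat).
Local Notation q := (m - s)%N.
Local Notation MM := 'M[K]_(m.+1).

Fact upl_lin : linear (@upleft K m.+1).
Proof. by move=> a u v; apply/matrixP=> i j; rewrite !mxE. Qed.
Definition uplLin : {linear MM -> 'M[K]_(m.+1.-1)} :=
  HB.pack (@upleft K m.+1) (GRing.isLinear.Build _ _ _ _ (@upleft K m.+1) upl_lin).
Lemma uplE (M : MM) : linfun (@upleft K m.+1) M = upleft M.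
Proof. exact: (lfunE uplLin M). Qed.

Lemma upl_inord (M : MM) (r c : 'I_m) : upleft M r c = M (inord r) (inord c).
Proof.
rewrite /upleft mxE; congr (M _ _); apply: val_inj; rewrite /= inordK //;
  apply: leq_trans (ltn_ord _) _; exact: leqnSn.
Qed.

Lemma vanish (M : MM) : alternating M -> WA1 s (upleft M) -> beL K m s M = 0 ->
  (forall i j, (i < j)%N -> (j < s)%N -> M (inord i) (inord j) = 0) ->
  forall i j, (i < m)%N -> (j < m)%N -> M (inord i) (inord j) = 0.
Proof.
move=> hA hW hbe hp.
have mixed : forall i j, (i < s)%N -> (s <= j < m)%N -> M (inord i) (inord j) = 0.
  move=> i j iS /andP[sj jm].
  have jq : (j - s < q)%N by lia.
  have := beLE M (Ordinal iS) (Ordinal jq); rewrite hbe ffunE mxE /=.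
  by rewrite subnKC.
move=> i j im jm.
case: (ltnP i s) => iS; case: (ltnP j s) => jS.
- case: (ltngtP i j) => hij.
  + exact: hp.
  + by rewrite (alt_skew hA) hp // oppr0.
  + by rewrite hij alt_diag.
- by apply: mixed; rewrite // jS.
- by rewrite (alt_skew hA) mixed ?oppr0 // iS.
- by apply: (W0 hA hW); rewrite ?iS ?jS.
Qed.

Lemma dimP (S : {vspace MM}) : (s <= m)%N -> (forall M, M \in S -> alternating M) ->
  (forall M, M \in S -> WA1 s (upleft M)) ->
  (\dim (linfun (@upleft K m.+1) @: S) <= 'C(s, 2) + \dim (beL K m s @: S))%N.
Proof.
move=> hsm hA hW.
set upl := linfun (@upleft K m.+1).
set be := beL K m s.
pose Z := (S :&: lker be)%VS.
have e1 := limg_ker_dim upl S.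
have e2 := limg_ker_dim be S.
have e3 := limg_ker_dim upl Z.
have i1 : (Z :&: lker upl <= S :&: lker upl)%VS by apply: capvS (capvSl _ _) (subvv _).
have d1 := dimvS i1.
pose P2 := {j : 'I_s & 'I_j}.
pose c := #|{: P2}|.
pose pj (x : P2) : 'I_m := widen_ord hsm (tag x).
pose pi (x : P2) : 'I_m :=
  widen_ord (leq_trans (ltnW (ltn_ord (tag x))) hsm) (tagged x).
pose chif (X : 'M[K]_(m.+1.-1)) : {ffun 'I_c -> 'rV[K]_1} :=
  [ffun k => const_mx (X (pi (enum_val k)) (pj (enum_val k)))].
have chi_lin : linear chif.
  by move=> a u v; apply/ffunP=> k; rewrite !ffunE; apply/matrixP=> r t; rewrite !mxE.
pose chiLin : {linear _ -> _} := HB.pack chif (GRing.isLinear.Build _ _ _ _ chif chi_lin).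
pose chiL := linfun chiLin.
have chiE : forall X k, chiL X k = const_mx (X (pi (enum_val k)) (pj (enum_val k))).
  by move=> X k; rewrite /chiL lfunE /= ffunE.
have inj : ((upl @: Z) :&: lker chiL = 0)%VS.
  apply/eqP; rewrite -subv0; apply/subvP => X /memv_capP[/memv_imgP[M /memv_capP[MS]]].
  rewrite memv_ker => /eqP hbe ->; rewrite memv_ker => /eqP hk.
  rewrite memv0 uplE; apply/eqP/matrixP => r t; rewrite upl_inord mxE.
  apply: (vanish (hA M MS) (hW M MS) hbe) => //.
  move=> i j ij jS.
  pose x : P2 := existT _ (Ordinal jS) (Ordinal ij).
  move/ffunP: hk => /(_ (enum_rank x)); rewrite chiE enum_rankK ffunE => /matrixP /(_ 0 0).
  by rewrite !mxE uplE upl_inord.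
have d2 : (\dim (upl @: Z) <= c)%N.
  rewrite -(limg_dim_eq inj).
  have := dimB (U := fullv) (V := chiL @: (upl @: Z)) (fun B _ k => memvf (B k)).
  by rewrite dimvf dim_matrix muln1.
have cE : c = 'C(s, 2) := card_pairs s.
rewrite -cE.
move: e1 e2 e3 d1 d2.
set a1 := \dim (S :&: lker upl); set a2 := \dim (upl @: S); set a3 := \dim S.
set a4 := \dim (S :&: lker be); set a5 := \dim (be @: S).
set a6 := \dim (Z :&: lker upl); set a7 := \dim (upl @: Z).
rewrite /Z -/a4.
lia.
Qed.

End App2.


Section Fin.
Variables (K : fieldType) (n : nat).

Lemma mxDE (A B : 'M[K]_n) i j : (A + B) i j = A i j + B i j.
Proof. by rewrite mxE. Qed.
Lemma mxNE (A : 'M[K]_n) i j : (- A) i j = - A i j.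
Proof. by rewrite mxE. Qed.

Lemma dm (p r0 : 'I_n) (X : 'M[K]_n) i j :
  (delta_mx p r0 *m X) i j = (i == p)%:R * X r0 j.
Proof.
rewrite mxE (bigD1 r0) //= mxE eqxx andbT big1 ?addr0 // => k nk.
by rewrite mxE (negPf nk) andbF mul0r.
Qed.

Lemma NX s (a : 'I_s -> K) (L : 'I_n) (w : 'I_s -> 'I_n) (X : 'M[K]_n) i j :
  ((\sum_t a t *: delta_mx L (w t)) *m X) i j = (i == L)%:R * \sum_t a t * X (w t) j.
Proof.
rewrite mulmx_suml summxE mulr_sumr; apply: eq_bigr => t _.
by rewrite -scalemxAl mxE dm mulrCA.
Qed.

Lemma XNT s (a : 'I_s -> K) (L : 'I_n) (w : 'I_s -> 'I_n) (X : 'M[K]_n) i j :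
  (X *m (\sum_t a t *: delta_mx L (w t))^T) i j = (j == L)%:R * \sum_t a t * X i (w t).
Proof.
rewrite -[X *m _]trmxK trmx_mul trmxK mxE NX; congr (_ * _).
by apply: eq_bigr => t _; rewrite mxE.
Qed.

Lemma quad_entry (A B : 'M[K]_n) i : (A *m B *m A^T) i i = (row i A *m B *m (row i A)^T) 0 0.
Proof.
rewrite -row_mul.
have -> : (A *m B *m A^T) i i = (row i (A *m B) *m A^T) 0 i by rewrite -row_mul [RHS]mxE.
rewrite [LHS]mxE [RHS]mxE; apply: eq_bigr => k _; congr (_ * _); by rewrite !mxE.
Qed.

End Fin.

Unset Implicit Arguments.


Theorem proposition4p3 (K : fieldType) (n s : nat) (S : {vspace 'M[K]_n}) :
  (0 < n)%N -> (0 < s)%N -> (2 * s < n - 1)%N ->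
  (forall M, M \in S -> alternating M) ->
  (forall M, M \in S -> WA1 s (upleft M)) ->
  ((a_dim n.-1 s)%:Z - (n%:Z - s%:Z - 3) < (\dim (linfun (@upleft K n) @: S)%VS)%:Z) ->
  (forall M, M \in S -> (\rank M <= 2 * s)%N) ->
  exists2 Q : 'M[K]_n, Q \in unitmx &
    forall M, M \in S -> WA1 s (Q *m M *m Q^T).
Proof.
case: n S => [//|m] S _ s0 hsn hA hW hd hr.
have hsm : (s <= m)%N by lia.
have hq : (s.+1 <= m - s)%N by lia.
have H3 : (s * (m - s) + 3 <= \dim (beL K m s @: S) + (m - s))%N.
  have := dimP hsm hA hW.
  move: hd; rewrite /a_dim /=.
  set C := 'C(s, 2); set D := \dim (linfun _ @: S); set Db := \dim (beL K m s @: S).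
  set w := (s * (m - s))%N.
  lia.
have [a ha] := core hq H3 (fun M MS fr => H2 (hA M MS) (hW M MS) (hr M MS) fr).
pose L : 'I_m.+1 := inord m.
pose w (t : 'I_s) : 'I_m.+1 := inord t.
have vL : (L : nat) = m by rewrite /L inordK.
have vw : forall t, (w t : nat) = t by move=> t; rewrite /w inordK //; have := ltn_ord t; lia.
have wL : forall t, (w t == L) = false.
  by move=> t; apply/negbTE; rewrite -val_eqE /= vw vL; have := ltn_ord t; lia.
have ltL : forall x : 'I_m.+1, x != L -> (x < m)%N.
  move=> x xL; have : (x : nat) != m.
    by apply: contra xL => /eqP e; apply/eqP/val_inj => /=; rewrite e vL.
  by have := ltn_ord x; lia.
pose N := \sum_(t < s) a t *: delta_mx L (w t).
have Nrow : forall t j, N (w t) j = 0.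
  by move=> t j; rewrite summxE big1 // => u _; rewrite !mxE wL /= mulr0.
have NN : N *m N = 0.
  apply/matrixP => i j; rewrite NX [RHS]mxE big1 ?mulr0 // => t _.
  by rewrite Nrow mulr0.
exists (1%:M - N).
  have : (1%:M - N) *m (1%:M + N) = 1%:M.
    by rewrite mulmxBl mul1mx mulmxDr mulmx1 NN addr0 addrK.
  by case/mulmx1_unit.
move=> M MS.
have hskM := alt_skew (hA M MS); have hdM := alt_diag (hA M MS).
have hsT : M^T = - M by case/andP: (hA M MS) => /eqP.
set R := (1%:M - N) *m M *m (1%:M - N)^T.
have RT : R^T = - R.
  by rewrite /R !trmx_mul trmxK hsT mulNmx mulmxN mulmxA.
have Rd : forall i, R i i = 0.
  by move=> i; rewrite /R quad_entry alt_quad ?mxE.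
have K1 : forall c : 'I_m.+1, (s <= c < m)%N -> M L c = \sum_t a t * M (w t) c.
  move=> c /andP[sc cm].
  have cq : (c - s < m - s)%N by lia.
  have := congr1 (fun v : 'rV_(m - s) => v 0 (Ordinal cq)) (ha M MS).
  have ec : inord (s + (c - s)) = c :> 'I_m.+1 by rewrite subnKC // inord_val.
  rewrite /= gaLE summxE ec => ->.
  by apply: eq_bigr => t _; rewrite mxE beLE /= ec.
have W0' : forall i j : 'I_m.+1, (s <= i < m)%N -> (s <= j < m)%N -> M i j = 0.
  move=> i j hi hj.
  by have := W0 (hA M MS) (hW M MS) hi hj; rewrite !inord_val.
have eR : R = M - N *m M - M *m N^T + N *m M *m N^T.
  rewrite /R linearB /= trmx1 mulmxBl mul1mx mulmxBr mulmx1 mulmxBl.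
  by rewrite opprB addrA addrAC.
apply/andP; split.
  apply/andP; split; first by rewrite RT.
  by apply/forallP => i; rewrite Rd.
apply/forallP => i; apply/forallP => j; apply/implyP => /andP[/andP[si sj] _].
case: (eqVneq i j) => [->|nij]; first by rewrite Rd.
apply/eqP; rewrite eR !mxDE !mxNE.
case: (eqVneq i L) => [iL|iL].
  have jL : j != L by rewrite -iL eq_sym.
  have h1 : (M *m N^T) i j = 0 by rewrite XNT (negPf jL) mul0r.
  have h2 : ((N *m M) *m N^T) i j = 0 by rewrite XNT (negPf jL) mul0r.
  rewrite h1 h2 subr0 addr0 NX iL eqxx mul1r K1 ?subrr //.
  by rewrite sj ltL.
have NMi : forall x, (N *m M) i x = 0 by move=> x; rewrite NX (negPf iL) mul0r.
have h2 : ((N *m M) *m N^T) i j = 0.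
  by rewrite XNT big1 ?mulr0 // => t _; rewrite NMi mulr0.
rewrite h2 NMi subr0 addr0.
case: (eqVneq j L) => [jL|jL].
  rewrite XNT jL eqxx mul1r.
  have K1' : M i L = \sum_t a t * M i (w t).
    rewrite hskM K1; last by rewrite si ltL.
    by rewrite -sumrN; apply: eq_bigr => t _; rewrite hskM mulrN opprK.
  by rewrite K1' subrr.
rewrite XNT (negPf jL) mul0r subr0.
by apply: W0'; rewrite ?si ?sj ltL.
Qed.
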